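(* Let $\alpha,L>0$, $\tau_0=\alpha/L$, $A_0=1$, and for $k\ge0$ define $a_k=\frac{\tau_k+\sqrt{\tau_k^2+4\tau_kA_k}}{2}$, $\tau_{k+1}=\tau_k+\alpha a_k/L$, $A_{k+1}=A_k+a_k$. Then for all $k\ge0$: (a) $A_k/L=\tau_k/\alpha$; (b) $a_k^2=\tau_kA_{k+1}=\tau_{k+1}A_k$; (c) $A_k\ge\left(1+\frac{\sqrt\alpha}{2\sqrt L}\right)^{2k}$. *)

(* Defs.v *)
From mathcomp Require Import all_boot all_order all_algebra.
Set Implicit Arguments. Unset Strict Implicit. Unset Printing Implicit Defensive.
Import Order.TTheory GRing.Theory Num.Theory.
Local Open Scope ring_scope.

Definition step_a (R : rcfType) (tau A : R) : R :=
  (tau + Num.sqrt (tau ^+ 2 + 4%:R * tau * A)) / 2%:R.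

Fixpoint tauA (R : rcfType) (alpha L : R) (k : nat) : R * R :=
  match k with
  | 0%N => (alpha / L, 1)
  | k'.+1 =>
      let: (t, A) := tauA alpha L k' in
      let a := step_a t A in
      (t + alpha * a / L, A + a)
  end.

Definition tau_seq (R : rcfType) (alpha L : R) (k : nat) : R := (tauA alpha L k).1.
Definition A_seq (R : rcfType) (alpha L : R) (k : nat) : R := (tauA alpha L k).2.
Definition a_seq (R : rcfType) (alpha L : R) (k : nat) : R :=
  step_a (tau_seq alpha L k) (A_seq alpha L k).

(* Main.v *)
Require Import Defs.
From mathcomp Require Import all_boot all_order all_algebra.
From mathcomp Require Import lra ring.
Import Order.TTheory GRing.Theory Num.Theory.
Local Open Scope ring_scope.

Lemma tauA_S (R : rcfType) (alpha L : R) k :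
  tauA alpha L k.+1 = (tau_seq alpha L k + alpha * a_seq alpha L k / L,
                       A_seq alpha L k + a_seq alpha L k).
Proof. by rewrite /= /a_seq /tau_seq /A_seq; case: tauA. Qed.

Lemma step_sq (R : rcfType) (t A : R) : 0 <= t -> 0 <= A ->
  step_a t A ^+ 2 = t * (A + step_a t A).
Proof.
move=> ht hA; rewrite /step_a.
have hD : 0 <= t ^+ 2 + 4%:R * t * A by rewrite addr_ge0 ?sqr_ge0 // !mulr_ge0.
have := sqr_sqrtr hD; set s := Num.sqrt _ => hs.
have -> : ((t + s) / 2%:R) ^+ 2 = (t^+2 + 2%:R * t * s + s ^+ 2) / 4%:R.
  by field.
rewrite hs; by field.
Qed.

Lemma step_lb (R : rcfType) (alpha L A c : R) : 0 < alpha -> 0 < L -> 0 < A ->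
  c = Num.sqrt alpha / (2%:R * Num.sqrt L) ->
  step_a (alpha * A / L) A >= 2%:R * c ^+ 2 * A + 2%:R * c * A.
Proof.
move=> ha hL hA hcdef.
have hc2 : c ^+ 2 = alpha / (4%:R * L).
  rewrite hcdef expr_div_n exprMn !sqr_sqrtr ?ltW //; field; lra.
have hc0 : 0 <= c by rewrite hcdef divr_ge0 ?sqrtr_ge0 // mulr_ge0 ?sqrtr_ge0.
set t := alpha * A / L.
have ht : t = 4%:R * c ^+ 2 * A by rewrite hc2 /t; field; lra.
have ht0 : 0 <= t by rewrite /t divr_ge0 ?mulr_ge0 ?ltW.
have hD : 0 <= t ^+ 2 + 4%:R * t * A by nra.
have := sqr_sqrtr hD; have := sqrtr_ge0 (t ^+ 2 + 4%:R * t * A).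
rewrite /step_a.
set s := Num.sqrt _ => hs0 hs2.
have hy : 0 <= 4%:R * c * A by nra.
have hs : 4%:R * c * A <= s.
  have : (4%:R * c * A) ^+ 2 <= s ^+ 2.
    rewrite hs2 ht.
    have -> : (4%:R * c * A) ^+ 2 = 16%:R * c^+2 * A ^+ 2 by ring.
    have : 0 <= (4%:R * c ^+ 2 * A) ^+ 2 by rewrite sqr_ge0.
    nra.
  nra.
rewrite ht.
have : 0 <= c * c * A by nra.
rewrite expr2 in hs *. lra.
Qed.

Theorem lemmaD2 (R : rcfType) (alpha L : R) (halpha : 0 < alpha) (hL : 0 < L) :
  forall k : nat,
    [/\ A_seq alpha L k / L = tau_seq alpha L k / alpha,
        a_seq alpha L k ^+ 2 = tau_seq alpha L k * A_seq alpha L k.+1,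
        a_seq alpha L k ^+ 2 = tau_seq alpha L k.+1 * A_seq alpha L k
      & A_seq alpha L k >= (1 + Num.sqrt alpha / (2%:R * Num.sqrt L)) ^+ (2 * k)].
Proof.
set c := Num.sqrt alpha / (2%:R * Num.sqrt L).
have hc0 : 0 <= c by rewrite /c divr_ge0 ?sqrtr_ge0 // mulr_ge0 ?sqrtr_ge0.
have hAS k : A_seq alpha L k.+1 = A_seq alpha L k + a_seq alpha L k.
  by rewrite {1}/A_seq tauA_S.
have htS k : tau_seq alpha L k.+1 = tau_seq alpha L k + alpha * a_seq alpha L k / L.
  by rewrite {1}/tau_seq tauA_S.
have inv k : [/\ 0 < A_seq alpha L k,
   tau_seq alpha L k = alpha * A_seq alpha L k / L
 & (1 + c) ^+ (2 * k) <= A_seq alpha L k].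
  elim: k => [|k [hA ht hb]].
    rewrite /A_seq /tau_seq /= expr0; split => //; try lra; by rewrite mulr1.
  have hlb := @step_lb R alpha L _ c halpha hL hA (erefl c).
  rewrite -ht -/(a_seq alpha L k) in hlb.
  rewrite hAS htS ht; split.
  - have : 0 <= c * c * A_seq alpha L k by nra. rewrite expr2 in hlb. nra.
  - by field; lra.
  - rewrite mulnS exprD.
    have hp : 0 <= (1 + c) ^+ (2 * k) by rewrite exprn_ge0 // addr_ge0.
    have : (1 + c) ^+ 2 * (1 + c) ^+ (2 * k) <= (1 + c) ^+ 2 * A_seq alpha L k.
      by rewrite ler_wpM2l // sqr_ge0.
    have : 0 <= c * c * A_seq alpha L k by nra.
    rewrite !expr2 in hlb *. nra.
move=> k; have [hA ht hb] := inv k.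
have hsq : a_seq alpha L k ^+ 2 = tau_seq alpha L k * A_seq alpha L k.+1.
  have ht0 : 0 <= tau_seq alpha L k by rewrite ht; apply: divr_ge0; nra.
  by rewrite hAS /a_seq step_sq // ltW.
split => //.
- by rewrite ht; field; lra.
- rewrite hsq hAS htS ht; field; lra.
Qed.
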